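(* Suppose the random walk $R$ is irreducible, aperiodic, positive recurrent and has negative drift. Let $\mu(n)=\mu_0+\sum_{i=1}^M\mu_i n_i$ with $\mu_0\ge1$ and $\mu_1,\dots,\mu_M\ge0$. Define $\mu^*=\max_{i=0,\dots,M}\mu_i$, $$v_i=\frac{-\mu^*}{\sup_{n\in S:\,i\in I(n)}\{s^+_i(n)-s^-_i(n)\}}\ (i=1,\dots,M),\qquad V(n)=\sum_{i=1}^M v_i n_i^2,$$ $$b=\mu_0+\sum_{i=1}^M v_i,\qquad B=\Big\{n\in S:\ n_i\le\frac{\mu_0+\sum_{l=1}^M v_l}{\mu^*}\ \ \forall i=1,\dots,M\Big\}.$$ Then $0\le v_i<\infty$, $V:S\to[0,\infty)$, $B$ is finite, and for all $n\in S$, $$\sum_{u\in N_{c(n)}}p_{c(n),u}V(n+u)-V(n)\le-\mu(n)+b\,\mathbf 1_B(n),$$ i.e. $R$ is $\mu$-ergodic.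
   Context: Let $M\ge 1$ and $S=\{0,1,2,\dots\}^M$. For $n\in S$ let $N(n)=\{u\in\{-1,0,1\}^M: n+u\in S\}$. A partition $C=\{C_k\}_{k\in K}$ ($K$ finite) of $S$ is a family of pairwise disjoint sets covering $S$ such that $N(n)=N(n')$ whenever $n,n'$ lie in the same $C_k$; write $N_k$ for this common set and $c(n)$ for the index $k$ with $n\in C_k$. The random walk $R$ is a discrete-time Markov chain on $S$ with transition probabilities $P(n,n+u)=p_{c(n),u}\ge0$ for $u\in N_{c(n)}$, $P(n,m)=0$ if $m-n\notin N_{c(n)}$, and $\sum_{u\in N_k}p_{k,u}=1$ for every $k$. For $n\in S$, $I(n)=\{i\in\{1,\dots,M\}: n_i>0\}$, $s^+_i(n)=\sum_{u\in N_{c(n)}:u_i=1}p_{c(n),u}$ and $s^-_i(n)=\sum_{u\in N_{c(n)}:u_i=-1}p_{c(n),u}$. $R$ has negative drift if $\sup_{n\in S,\,i\in I(n)}\{s^+_i(n)-s^-_i(n)\}<0$. *)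

(* Defs.v *)
From Stdlib Require Import Reals ZArith ClassicalEpsilon.
From mathcomp Require Import all_boot.
Local Open Scope R_scope.
Set Implicit Arguments. Unset Strict Implicit. Unset Printing Implicit Defensive.

Definition pt (M : nat) := {ffun 'I_M -> nat}.
(* a step u in {-1,0,1}^M is encoded by j : 'I_3 in each coordinate, u_i = j - 1 *)
Definition dir (M : nat) := {ffun 'I_M -> 'I_3}.
Definition du M (u : dir M) (i : 'I_M) : Z := (Z.of_nat (nat_of_ord (u i)) - 1)%Z.

Definition Nset M (n : pt M) : pred (dir M) :=
  fun u => [forall i, Z.leb 0 (Z.of_nat (n i) + du u i)].

(* n + u (meaningful when u \in Nset n) *)
Definition add_step M (n : pt M) (u : dir M) : pt M :=
  [ffun i => Z.to_nat (Z.of_nat (n i) + du u i)].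

Notation "\rsum_ ( i | P ) F" := (\big[Rplus/0]_(i | P) F)
  (at level 41, F at level 41, i at level 50).
Notation "\rsum_ ( i < n ) F" := (\big[Rplus/0]_(i < n) F)
  (at level 41, F at level 41, i, n at level 50).

(* ---------- the random walk R ----------
   K : finite index set of the partition, c : S -> K the class map,
   Nk : K -> set of steps (N_k), p : K -> step -> R the transition
   probabilities p_{k,u}. *)
Record rwalk (M : nat) := RWalk {
  K : finType;
  c : pt M -> K;
  Nk : K -> pred (dir M);
  p : K -> dir M -> R
}.
Arguments K {M} r.
Arguments c {M} r _.
Arguments Nk {M} r _.
Arguments p {M} r _ _.

Definition rwalk_ok M (W : rwalk M) : Prop :=
  (forall n : pt M, forall u, (u \in Nk W (c W n)) = (u \in Nset n)) /\
  (forall k u, u \in Nk W k -> (0 <= p W k u)) /\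
  (forall k, \rsum_(u | u \in Nk W k) p W k u = 1).

Definition P1 M (W : rwalk M) (n m : pt M) : R :=
  \rsum_(u | (u \in Nk W (c W n)) && (add_step n u == m)) p W (c W n) u.

Fixpoint Pt M (W : rwalk M) (t : nat) (n m : pt M) : R :=
  match t with
  | 0 => if n == m then 1 else 0
  | t'.+1 => \rsum_(u | u \in Nk W (c W n)) (p W (c W n) u * Pt W t' (add_step n u) m)
  end.

(* first-passage probability: F t n m = P(first visit to m at time t | start n), t >= 1 *)
Fixpoint Ft M (W : rwalk M) (t : nat) (n m : pt M) : R :=
  match t with
  | 0 => 0
  | 1 => P1 W n m
  | t'.+1 => \rsum_(u | u \in Nk W (c W n))
               (p W (c W n) u * (if add_step n u == m then 0 else Ft W t' (add_step n u) m))
  end.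

Definition irreducible M (W : rwalk M) : Prop :=
  forall n m : pt M, exists t, (0 < Pt W t n m).

Definition aperiodic M (W : rwalk M) : Prop :=
  forall n : pt M, forall d : nat,
    (forall t, (0 < t)%N -> (0 < Pt W t n n) -> (d %| t)%N) -> d = 1%N.

Definition positive_recurrent M (W : rwalk M) : Prop :=
  forall n : pt M,
    infinite_sum (fun t => Ft W t n n) 1 /\
    exists L, infinite_sum (fun t => (INR t * Ft W t n n)) L.

Definition splus M (W : rwalk M) (i : 'I_M) (n : pt M) : R :=
  \rsum_(u | (u \in Nk W (c W n)) && Z.eqb (du u i) 1) p W (c W n) u.
Definition sminus M (W : rwalk M) (i : 'I_M) (n : pt M) : R :=
  \rsum_(u | (u \in Nk W (c W n)) && Z.eqb (du u i) (-1)) p W (c W n) u.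

(* supremum of a subset of R (the least upper bound when it exists;
   an arbitrary value 0 otherwise -- never used in that case) *)
Definition supR (E : R -> Prop) : R :=
  match excluded_middle_informative (bound E /\ exists x, E x) with
  | left H => proj1_sig (completeness E (proj1 H) (proj2 H))
  | right _ => 0
  end.

Definition drift_set M (W : rwalk M) : R -> Prop :=
  fun r => exists (n : pt M) (i : 'I_M), (0 < n i)%N /\ r = (splus W i n - sminus W i n).
Definition drift_set_i M (W : rwalk M) (i : 'I_M) : R -> Prop :=
  fun r => exists (n : pt M), (0 < n i)%N /\ r = (splus W i n - sminus W i n).

Definition negative_drift M (W : rwalk M) : Prop := (supR (drift_set W) < 0).

Definition mu_fun M (mu0 : R) (mu : 'I_M -> R) (n : pt M) : R :=
  (mu0 + \rsum_(i < M) (mu i * INR (n i))).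
Definition mu_star M (mu0 : R) (mu : 'I_M -> R) : R :=
  \big[Rmax/mu0]_(i < M) mu i.
Definition vcoef M (W : rwalk M) (mu0 : R) (mu : 'I_M -> R) (i : 'I_M) : R :=
  (- mu_star mu0 mu / supR (drift_set_i W i)).
Definition Vfun M (W : rwalk M) (mu0 : R) (mu : 'I_M -> R) (n : pt M) : R :=
  \rsum_(i < M) (vcoef W mu0 mu i * INR (n i) ^ 2).
Definition bconst M (W : rwalk M) (mu0 : R) (mu : 'I_M -> R) : R :=
  (mu0 + \rsum_(i < M) vcoef W mu0 mu i).
Definition inB M (W : rwalk M) (mu0 : R) (mu : 'I_M -> R) (n : pt M) : bool :=
  [forall i, if Rle_dec (INR (n i)) (bconst W mu0 mu / mu_star mu0 mu)
             then true else false].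

(* Main.v *)
Require Import Defs.
From Stdlib Require Import Reals ZArith.
From mathcomp Require Import all_boot.
From HB Require Import structures.
From Stdlib Require Import Lra Lia ClassicalEpsilon.
Local Open Scope R_scope.

HB.instance Definition _ := Monoid.isComLaw.Build R 0 Rplus
  (fun a b c => esym (Rplus_assoc a b c)) Rplus_comm Rplus_0_l.

Lemma rsum_le (I : finType) (P : pred I) (F G : I -> R) :
  (forall i, P i -> F i <= G i) -> \rsum_(i | P i) F i <= \rsum_(i | P i) G i.
Proof. move=> h; apply: (big_ind2 (fun a b => a <= b)) => //; [lra| move=> *; lra]. Qed.

Lemma rsum_scal (I : finType) (P : pred I) (F : I -> R) a :
  \rsum_(i | P i) (a * F i) = a * \rsum_(i | P i) F i.
Proof. apply: (big_rec2 (fun x y => x = a * y)); [ring | move=> i y1 y2 _ ->; ring]. Qed.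

Lemma rsum_ge0 (I : finType) (P : pred I) (F : I -> R) :
  (forall i, P i -> 0 <= F i) -> 0 <= \rsum_(i | P i) F i.
Proof. move=> h; apply: (big_ind (fun a => 0 <= a)) => //; [lra | move=> *; lra]. Qed.

Lemma rsum_plus (I : finType) (P : pred I) (F G : I -> R) :
  \rsum_(i | P i) (F i + G i) = \rsum_(i | P i) F i + \rsum_(i | P i) G i.
Proof. by rewrite big_split. Qed.

Lemma supR_spec E : bound E -> (exists x, E x) -> is_lub E (supR E).
Proof.
move=> hb he; rewrite /supR; case: (excluded_middle_informative _) => H; last by exfalso; tauto.
by case: (completeness E (proj1 H) (proj2 H)).
Qed.

Lemma supR_neg E : supR E < 0 -> bound E /\ exists x, E x.
Proof. rewrite /supR; case: (excluded_middle_informative _) => //= _; lra. Qed.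

Lemma rsum_mkcond (I : finType) (P Q : pred I) (F : I -> R) :
  \rsum_(i | P i && Q i) F i = \rsum_(i | P i) (if Q i then F i else 0).
Proof. exact: big_mkcondr. Qed.

Lemma rsum_exch (I J : finType) (P : pred I) (F : I -> J -> R) :
  \rsum_(i | P i) \big[Rplus/0]_(j : J) F i j = \big[Rplus/0]_(j : J) \rsum_(i | P i) F i j.
Proof. exact: exchange_big. Qed.

Lemma rsum_D1 (J : finType) (F : J -> R) j :
  \big[Rplus/0]_(i : J) F i = F j + \rsum_(i | i != j) F i.
Proof. exact: bigD1. Qed.

Lemma rsum_plusT (I : finType) (F G : I -> R) :
  \big[Rplus/0]_(i : I) (F i + G i) = \big[Rplus/0]_(i : I) F i + \big[Rplus/0]_(i : I) G i.
Proof. by rewrite big_split. Qed.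

Lemma rsum_scalT (I : finType) (F : I -> R) a :
  \big[Rplus/0]_(i : I) (a * F i) = a * \big[Rplus/0]_(i : I) F i.
Proof. exact: rsum_scal. Qed.

Lemma rsum_leT (I : finType) (F G : I -> R) :
  (forall i, F i <= G i) -> \big[Rplus/0]_(i : I) F i <= \big[Rplus/0]_(i : I) G i.
Proof. move=> h; exact: rsum_le. Qed.

Lemma rsum_ge0T (I : finType) (F : I -> R) :
  (forall i, 0 <= F i) -> 0 <= \big[Rplus/0]_(i : I) F i.
Proof. move=> h; exact: rsum_ge0. Qed.

Lemma rsum_plusO n (F G : 'I_n -> R) :
  \rsum_(i < n) (F i + G i) = \rsum_(i < n) F i + \rsum_(i < n) G i.
Proof. by rewrite big_split. Qed.

Lemma rsum_scalO n (F : 'I_n -> R) a :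
  \rsum_(i < n) (a * F i) = a * \rsum_(i < n) F i.
Proof. exact: rsum_scal. Qed.

Lemma rsum_leO n (F G : 'I_n -> R) :
  (forall i, F i <= G i) -> \rsum_(i < n) F i <= \rsum_(i < n) G i.
Proof. move=> h; exact: rsum_le. Qed.

Lemma rsum_ge0O n (F : 'I_n -> R) :
  (forall i, 0 <= F i) -> 0 <= \rsum_(i < n) F i.
Proof. move=> h; exact: rsum_ge0. Qed.

Lemma rsum_D1O n (F : 'I_n -> R) j :
  \rsum_(i < n) F i = F j + \rsum_(i | i != j) F i.
Proof. exact: bigD1. Qed.

Lemma sup_i M (W : rwalk M) (i : 'I_M) : negative_drift W ->
  bound (drift_set_i W i) /\ is_lub (drift_set_i W i) (supR (drift_set_i W i)) /\
  supR (drift_set_i W i) < 0.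
Proof.
move=> hd; have [hb he] := @supR_neg (drift_set W) hd.
have [ub lub] := @supR_spec _ hb he.
have hbi : bound (drift_set_i W i).
  exists (supR (drift_set W)) => r [n [hn ->]]; apply: ub; exists n, i; by split.
have hei : exists x, drift_set_i W i x.
  exists (splus W i [ffun _ => 1%N] - sminus W i [ffun _ => 1%N]).
  exists [ffun _ => 1%N]; by rewrite ffunE.
have [ubi lubi] := @supR_spec _ hbi hei.
split=> //; split=> //.
apply: Rle_lt_trans hd; apply: lubi => r [n [hn ->]]; apply: ub; exists n, i; by split.
Qed.

Lemma mu_star_ge M mu0 (mu : 'I_M -> R) : mu0 <= mu_star mu0 mu.
Proof.
rewrite /mu_star; apply: (big_rec (fun a => mu0 <= a)); first lra.
move=> i x _ h; apply: Rle_trans h (Rmax_r _ _).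
Qed.

Lemma mu_star_ge_i M mu0 (mu : 'I_M -> R) j : mu j <= mu_star mu0 mu.
Proof.
rewrite /mu_star.
have : j \in index_enum 'I_M by rewrite mem_index_enum.
elim: (index_enum 'I_M) => // a s IH; rewrite inE big_cons => /orP [/eqP ->|h].
  by apply: Rmax_l.
apply: Rle_trans (IH h) (Rmax_r _ _).
Qed.

Lemma du_cases M (u : dir M) i : du u i = (-1)%Z \/ du u i = 0%Z \/ du u i = 1%Z.
Proof. rewrite /du; case: (u i) => [[|[|[|k]]] hk] //=; lia. Qed.

Lemma add_step_val M (n : pt M) (u : dir M) i : u \in Nset n ->
  INR (add_step n u i) = INR (n i) + IZR (du u i).
Proof.
move=> /forallP /(_ i) /Z.leb_le h; rewrite ffunE.
rewrite INR_IZR_INZ Z2Nat.id // plus_IZR -INR_IZR_INZ //.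
Qed.

Lemma drift_eq M (W : rwalk M) (n : pt M) i :
  \rsum_(u | u \in Nk W (c W n)) (p W (c W n) u * IZR (du u i)) = splus W i n - sminus W i n.
Proof.
rewrite /splus /sminus !rsum_mkcond.
transitivity (\rsum_(u | u \in Nk W (c W n))
   ((if Z.eqb (du u i) 1 then p W (c W n) u else 0) +
    (-1) * (if Z.eqb (du u i) (-1) then p W (c W n) u else 0))).
  apply: eq_bigr => u _; case: (@du_cases _ u i) => [h|[h|h]]; rewrite h /=; lra.
by rewrite rsum_plus rsum_scal; ring.
Qed.

Lemma coord_bound M (W : rwalk M) (n : pt M) i : rwalk_ok W ->
  \rsum_(u | u \in Nk W (c W n)) (p W (c W n) u * INR (add_step n u i) ^ 2) - INR (n i) ^ 2
  <= 2 * INR (n i) * (splus W i n - sminus W i n) + 1.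
Proof.
move=> [hN [hp hs]].
set x := INR (n i).
have : \rsum_(u | u \in Nk W (c W n)) (p W (c W n) u * INR (add_step n u i) ^ 2) <=
       \rsum_(u | u \in Nk W (c W n)) ((x ^ 2 * p W (c W n) u +
            (2 * x) * (p W (c W n) u * IZR (du u i))) + p W (c W n) u).
  apply: rsum_le => u hu.
  have hu' : u \in Nset n by rewrite -hN.
  rewrite (@add_step_val _ n u i hu') -/x.
  have h0 := hp _ _ hu.
  have hd : IZR (du u i) ^ 2 <= 1 by case: (@du_cases _ u i) => [h|[h|h]]; rewrite h /=; lra.
  set d := IZR (du u i) in hd *.
  have : p W (c W n) u * (d ^ 2) <= p W (c W n) u * 1 by apply: Rmult_le_compat_l.
  nra.
rewrite !rsum_plus !rsum_scal hs drift_eq; lra.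
Qed.

Theorem lemma4p3 (M : nat) (W : rwalk M) (mu0 : R) (mu : 'I_M -> R) :
  (0 < M)%N ->
  rwalk_ok W ->
  irreducible W -> aperiodic W -> positive_recurrent W -> negative_drift W ->
  (1 <= mu0) -> (forall i, 0 <= mu i) ->
  (forall i : 'I_M, (0 <= vcoef W mu0 mu i) /\
                    bound (drift_set_i W i) /\ supR (drift_set_i W i) <> 0) /\
  (forall n : pt M, (0 <= Vfun W mu0 mu n)) /\
  (exists s : seq (pt M), forall n, inB W mu0 mu n -> n \in s) /\
  (forall n : pt M,
     (\rsum_(u | u \in Nk W (c W n)) (p W (c W n) u * Vfun W mu0 mu (add_step n u))
        - Vfun W mu0 mu n
      <= - mu_fun mu0 mu n + bconst W mu0 mu * (if inB W mu0 mu n then 1 else 0))).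
Proof.
move=> _ hok _ _ _ hd h0 hmu.
set ms := mu_star mu0 mu.
have hms : 1 <= ms by apply: Rle_trans h0 (mu_star_ge _ mu0 mu).
have hv : forall i, 0 <= vcoef W mu0 mu i.
  move=> i; have [_ [_ hs]] := @sup_i _ W i hd.
  rewrite /vcoef -/ms /Rdiv.
  have : 0 < - / supR (drift_set_i W i) by apply: Ropp_0_gt_lt_contravar; apply: Rinv_lt_0_compat.
  nra.
have hV : forall n : pt M, 0 <= Vfun W mu0 mu n.
  move=> n; apply: rsum_ge0 => i _; apply: Rmult_le_pos => //; apply: pow2_ge_0.
split.
  move=> i; have [hb [_ hs]] := @sup_i _ W i hd; split=> //; split=> //; lra.
split=> //.
split.
  set r := bconst W mu0 mu / ms.
  set K0 := Z.to_nat (up r).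
  exists (map (fun f : {ffun 'I_M -> 'I_K0.+1} => [ffun i => nat_of_ord (f i)] : pt M)
              (enum {ffun 'I_M -> 'I_K0.+1})).
  move=> n /forallP hB.
  have hle : forall i, (n i < K0.+1)%N.
    move=> i; have := hB i; case: (Rle_dec (INR (n i)) r) => [h _|//].
    have h1 : INR (n i) < IZR (up r).
      have [ha _] := archimed r; exact: Rle_lt_trans h ha.
    rewrite INR_IZR_INZ in h1; apply lt_IZR in h1.
    apply/ltP; rewrite /K0; lia.
  have -> : n = [ffun i => nat_of_ord ([ffun j => (inord (n j) : 'I_K0.+1)] i)].
    apply/ffunP => i; rewrite !ffunE inordK //.
  apply: map_f; by rewrite mem_enum.
move=> n.
set N := Nk W (c W n).
set q := p W (c W n).
set v := vcoef W mu0 mu.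
set x := fun i => INR (n i).
have step1 : \rsum_(u | u \in N) (q u * Vfun W mu0 mu (add_step n u)) =
   \rsum_(i < M) (v i * \rsum_(u | u \in N) (q u * INR (add_step n u i) ^ 2)).
  rewrite /Vfun.
  transitivity (\rsum_(u | u \in N) \rsum_(i < M) (q u * (v i * INR (add_step n u i) ^ 2))).
    by apply: eq_bigr => u _; rewrite rsum_scal.
  rewrite rsum_exch; apply: eq_bigr => i _; rewrite -rsum_scal; apply: eq_bigr => u _; ring.
have step2 : \rsum_(i < M) (v i * \rsum_(u | u \in N) (q u * INR (add_step n u i) ^ 2))
     - Vfun W mu0 mu n <= \rsum_(i < M) (v i + (-2 * ms) * x i).
  have -> : \rsum_(i < M) (v i * \rsum_(u | u \in N) (q u * INR (add_step n u i) ^ 2))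
     - Vfun W mu0 mu n = \rsum_(i < M) (v i * (\rsum_(u | u \in N) (q u * INR (add_step n u i) ^ 2))
       + (-1) * (v i * INR (n i) ^ 2)) by rewrite rsum_plusO rsum_scalO /Vfun -/v; ring.
  apply: rsum_leO => i.
  have hc := @coord_bound _ W n i hok.
  rewrite -/N -/q -/x in hc.
  have hvi : 0 <= v i := hv i.
  have hx : 0 <= x i by apply: pos_INR.
  have e1 : v i * (\rsum_(u | u \in N) (q u * INR (add_step n u i) ^ 2)) + -1 * (v i * INR (n i) ^ 2)
     <= v i * (2 * x i * (splus W i n - sminus W i n) + 1).
    have := Rmult_le_compat_l _ _ _ hvi hc; rewrite /x; lra.
  apply: Rle_trans e1 _.
  case: (posnP (n i)) => hn.
    rewrite /x hn /=; lra.
  have [_ [[ub _] hs]] := @sup_i _ W i hd.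
  have hdi : splus W i n - sminus W i n <= supR (drift_set_i W i).
    apply: ub; exists n; by split.
  have hvs : v i * supR (drift_set_i W i) = - ms.
    rewrite /v /vcoef -/ms; field; lra.
  have := Rmult_le_compat_l _ _ _ hvi hdi.
  have := Rmult_le_compat_l _ _ _ hx (Rmult_le_compat_l _ _ _ hvi hdi).
  nra.
rewrite step1; apply: Rle_trans step2 _.
rewrite rsum_plusO rsum_scalO /mu_fun /bconst -/v.
have hsx : 0 <= \rsum_(i < M) x i by apply: rsum_ge0O => i; apply: pos_INR.
have hmx : \rsum_(i < M) (mu i * INR (n i)) <= ms * \rsum_(i < M) x i.
  rewrite -rsum_scalO; apply: rsum_leO => i; apply: Rmult_le_compat_r; first exact: pos_INR.
  exact: mu_star_ge_i.
have hpos : 0 <= ms * \rsum_(i < M) x i by apply: Rmult_le_pos => //; lra.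
case hB: (inB W mu0 mu n).
  lra.
move/negbT: hB => /forallPn [j]; case: (Rle_dec _ _) => [//|hj _].
have hj' : bconst W mu0 mu < ms * x j.
  have hj2 : bconst W mu0 mu / ms < x j by rewrite /x; apply: Rnot_le_lt.
  have := Rmult_lt_compat_l ms _ _ ltac:(lra) hj2.
  by rewrite /Rdiv -Rmult_assoc (Rmult_comm ms) Rmult_assoc Rinv_r ?Rmult_1_r; [|lra].
have hxj : x j <= \rsum_(i < M) x i.
  rewrite (@rsum_D1O _ _ j); have : 0 <= \rsum_(i | i != j) x i by apply: rsum_ge0 => i _; apply: pos_INR.
  lra.
have := Rmult_le_compat_l _ _ _ (ltac:(lra) : 0 <= ms) hxj.
rewrite /bconst -/v in hj'.
lra.
Qed.
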